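(* Let $\Pi_n$ be a standard PARITY$_n$ program such that no rule $y\leftarrow B$ of $\Pi_n$ has $y\in var(B)$ and every rule body of $\Pi_n$ is consistent. Then there is an almost pure PARITY$_n$ program $\Pi_n'$ with $|\Pi_n'|\le|\Pi_n|$.
   Context: A rule element is one of $\top$, $\bot$, $x$, $not\ x$, $not\ not\ x$, where $x$ is a variable. A (canonical) rule is $H\leftarrow B$ with $H$ a variable or $\bot$ and $B$ a finite set of rule elements; a canonical program is a finite set of rules. For a body $B$, $var(B)=\{e\in B: e\text{ is a variable}\}$. For a set of variables $I$: $I\models\top$; $I\not\models\bot$; $I\models x$ iff $I\models not\ not\ x$ iff $x\in I$; $I\models not\ x$ iff $x\notin I$; $I\models B$ iff $I$ satisfies every element of $B$; $I$ is closed under $H\leftarrow B$ if $I\models B$ implies $I\models H$. The reduct $\Pi^I$ replaces $not\ not\ x$ by $\top$ if $x\in I$ else $\bot$, and $not\ x$ by $\top$ if $x\notin I$ else $\bot$; $I$ is an answer set of $\Pi$ if $I$ is the least set closed under all rules of $\Pi^I$; $Ans(\Pi)$ is the set of answer sets; $var(\Pi)$ the set of variables occurring in $\Pi$; $|\Pi|$ the number of rules. Strings $w\in\{0,1\}^n$ are identified with $\{x_i:w_i=1\}$; PARITY$_n$ is the set of strings in $\{0,1\}^n$ with an odd number of 1's; a PARITY$_n$ program is a canonical program $\Pi$ with $var(\Pi)=\{x_1,\dots,x_n\}$ and $Ans(\Pi)=$ PARITY$_n$. For a set $B$ of rule elements, $S(B)=\{I\subseteq\{x_1,\dots,x_n\}: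 I\models B\}$; $B$ is consistent if $S(B)\neq\emptyset$. $B$ covers a variable $x$ if $x\in B$, $not\ x\in B$ or $not\ not\ x\in B$; $B$ fully covers $\{x_1,\dots,x_n\}$ if it covers every $x_i$. A PARITY$_n$ program $\Pi$ is standard if for every rule $x\leftarrow B\in\Pi$ with head a variable $x$: whenever $S(B\cup\{x\})$ has exactly one element, $not\ not\ x\notin B$. For a program $\Pi$, $F^-(\Pi)$ is the set of rules $H\leftarrow B\in\Pi$ such that $B\cup\{H\}$ does not fully cover $\{x_1,\dots,x_n\}$ (when $H=\bot$, this means $B$ does not fully cover), and $F^+(\Pi)=\Pi\setminus F^-(\Pi)$. An almost pure PARITY$_n$ program is a standard PARITY$_n$ program in which no rule $y\leftarrow B$ has $y\in var(B)$, every rule body is consistent, and every rule $H\leftarrow B\in F^+(\Pi)$ satisfies $var(B)=\emptyset$. *)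

(* Defs.v *)
(* Canonical logic programs over the variables x_1..x_n,
   represented by the ordinals 'I_n (x_{i+1} <-> i : 'I_n). *)
From HB Require Import structures.
From mathcomp Require Import all_boot.

Set Implicit Arguments.
Unset Strict Implicit.
Unset Printing Implicit Defensive.

Section Canonical.
Variable n : nat.

Inductive elem : Type :=
  | ETop | EBot | EVar of 'I_n | ENot of 'I_n | ENotNot of 'I_n.

Definition elem_code (e : elem) : unit + unit + 'I_n + 'I_n + 'I_n :=
  match e with
  | ETop => inl (inl (inl (inl tt)))
  | EBot => inl (inl (inl (inr tt)))
  | EVar i => inl (inl (inr i))
  | ENot i => inl (inr i)
  | ENotNot i => inr i
  end.

Definition elem_decode (c : unit + unit + 'I_n + 'I_n + 'I_n) : elem :=
  match c with
  | inl (inl (inl (inl _))) => ETop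
  | inl (inl (inl (inr _))) => EBot
  | inl (inl (inr i)) => EVar i
  | inl (inr i) => ENot i
  | inr i => ENotNot i
  end.

Lemma elem_codeK : cancel elem_code elem_decode.
Proof. by case. Qed.

HB.instance Definition _ := Finite.copy elem (can_type elem_codeK).

(* A body is a finite set of rule elements; a rule is H <- B where the head
   is Some x (a variable) or None (bot); a program is a finite set of rules. *)
Definition body := {set elem}.
Definition rule := (option 'I_n * {set elem})%type.
Definition program := {set rule}.

Definition head (r : rule) : option 'I_n := r.1.
Definition rbody (r : rule) : body := r.2.

Definition interp := {set 'I_n}.

Definition sat_elem (I : interp) (e : elem) : bool :=
  match e with
  | ETop => true
  | EBot => false
  | EVar x => x \in I
  | ENot x => x \notin I
  | ENotNot x => x \in I
  end.

Definition sat_body (I : interp) (B : body) : bool :=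
  [forall e in B, sat_elem I e].

Definition sat_head (I : interp) (h : option 'I_n) : bool :=
  if h is Some x then x \in I else false.

Definition reduct_elem (I : interp) (e : elem) : elem :=
  match e with
  | ENot x => if x \notin I then ETop else EBot
  | ENotNot x => if x \in I then ETop else EBot
  | e => e
  end.

Definition reduct_rule (I : interp) (r : rule) : rule :=
  (head r, [set reduct_elem I e | e in rbody r]).

Definition reduct (P : program) (I : interp) : program :=
  [set reduct_rule I r | r in P].

Definition closed_rule (J : interp) (r : rule) : bool :=
  sat_body J (rbody r) ==> sat_head J (head r).

Definition closed_prog (J : interp) (P : program) : Prop :=
  forall r, r \in P -> closed_rule J r.

Definition answer_set (P : program) (I : interp) : Prop :=
  closed_prog I (reduct P I) /\
  forall J : interp, closed_prog J (reduct P I) -> I \subset J.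

Definition elem_vars (e : elem) : {set 'I_n} :=
  match e with
  | EVar x | ENot x | ENotNot x => [set x]
  | _ => set0
  end.

Definition rule_vars (r : rule) : {set 'I_n} :=
  (if head r is Some x then [set x] else set0) :|:
  \bigcup_(e in rbody r) elem_vars e.

Definition prog_vars (P : program) : {set 'I_n} :=
  \bigcup_(r in P) rule_vars r.

(* var(B): the variables that are themselves elements of B. *)
Definition pos_vars (B : body) : {set 'I_n} := [set x | EVar x \in B].

Definition parity_program (P : program) : Prop :=
  prog_vars P = setT /\
  forall I : interp, answer_set P I <-> odd #|I|.

Definition S (B : body) : {set interp} := [set I : interp | sat_body I B].

Definition consistent (B : body) : Prop := S B != set0.

Definition covers (B : body) (x : 'I_n) : bool :=
  [|| EVar x \in B, ENot x \in B | ENotNot x \in B].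

Definition fully_covers (B : body) : bool := [forall x, covers B x].

Definition standard (P : program) : Prop :=
  parity_program P /\
  forall x B, (Some x, B) \in P ->
    #|S (EVar x |: B)| = 1 -> ENotNot x \notin B.

(* B u {H}, where H = bot adds no variable (bot covers nothing). *)
Definition body_with_head (r : rule) : body :=
  if head r is Some x then EVar x |: rbody r else rbody r.

Definition Fminus (P : program) : {set rule} :=
  [set r in P | ~~ fully_covers (body_with_head r)].

Definition Fplus (P : program) : {set rule} := P :\: Fminus P.

Definition no_self_loop (P : program) : Prop :=
  forall y B, (Some y, B) \in P -> y \notin pos_vars B.

Definition bodies_consistent (P : program) : Prop :=
  forall r, r \in P -> consistent (rbody r).

Definition almost_pure (P : program) : Prop :=
  [/\ standard P, no_self_loop P, bodies_consistent P &
      forall r, r \in Fplus P -> pos_vars (rbody r) = set0].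

End Canonical.

(* Main.v *)
Require Import Defs.
From HB Require Import structures.
From mathcomp Require Import all_boot.

Set Implicit Arguments.
Unset Strict Implicit.
Unset Printing Implicit Defensive.

Section Aux.
Variable n : nat.
Implicit Types (I J K L : interp n) (B C : body n) (e : elem n) (r : rule n).

Definition conv B : body n :=
  [set e : elem n | match e with
     | EVar _ => false
     | ENotNot y => (ENotNot y \in B) || (EVar y \in B)
     | _ => e \in B end].

Definition fr r : rule n :=
  if fully_covers (body_with_head r) then (Defs.head r, conv (rbody r)) else r.

Definition isnv e := if e is EVar _ then false else true.

Lemma sat_bodyP K B : reflect (forall e, e \in B -> sat_elem K e) (sat_body K B).
Proof. exact: forall_inP. Qed.

Lemma in_conv B e : (e \in conv B) = match e with
     | EVar _ => false
     | ENotNot y => (ENotNot y \in B) || (EVar y \in B)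
     | _ => e \in B end.
Proof. by rewrite inE. Qed.

Lemma conv_nv B e : e \in conv B -> isnv e.
Proof. by rewrite in_conv; case: e. Qed.

Lemma sat_conv K B : sat_body K (conv B) = sat_body K B.
Proof.
apply/sat_bodyP/sat_bodyP => H e.
- case: e => [|| y | y | y] He.
  + done.
  + by have := H (EBot n); rewrite in_conv He; apply.
  + by have := H (ENotNot y); rewrite in_conv He orbT; apply.
  + by have := H (ENot y); rewrite in_conv He; apply.
  + by have := H (ENotNot y); rewrite in_conv He; apply.
- rewrite in_conv; case: e => [|| y | y | y] /=.
  + by move=> _.
  + exact: H.
  + by [].
  + exact: H.
  + by case/orP => He; [exact: (H _ He) | exact: (H _ He)].
Qed.

Lemma sat_imset K (h : elem n -> elem n) B :
  sat_body K [set h e | e in B] = [forall e in B, sat_elem K (h e)].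
Proof.
apply/sat_bodyP/forall_inP => H e He.
- exact/H/imset_f.
- by case/imsetP: He => e' He' ->; apply: H.
Qed.

Lemma red_self I e : sat_elem I (reduct_elem I e) = sat_elem I e.
Proof. by case: e => //= x; case: (x \in I). Qed.

Lemma red_nonvar K I e : isnv e -> sat_elem K (reduct_elem I e) = sat_elem I e.
Proof. by case: e => //= x _; case: (x \in I). Qed.

Lemma red_mono K L I e : K \subset L ->
  sat_elem K (reduct_elem I e) -> sat_elem L (reduct_elem I e).
Proof.
move=> /subsetP sKL; case: e => /= [||x|x|x].
- by [].
- by [].
- exact: sKL.
- by case: (x \in I).
- by case: (x \in I).
Qed.

Lemma sat_red_self I B : sat_body I [set reduct_elem I e | e in B] = sat_body I B.
Proof.
rewrite sat_imset; apply/forall_inP/sat_bodyP => H e He.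
- by rewrite -red_self; apply: H.
- by rewrite red_self; apply: H.
Qed.

Lemma red_conv K I B : sat_body K [set reduct_elem I e | e in conv B] = sat_body I B.
Proof.
rewrite sat_imset -(sat_conv I); apply/forall_inP/sat_bodyP => H e He.
- by rewrite -(red_nonvar K) ?(conv_nv He) //; apply: H.
- by rewrite red_nonvar ?(conv_nv He) //; apply: H.
Qed.

Lemma red_mono_body K L I B : K \subset L ->
  sat_body K [set reduct_elem I e | e in B] -> sat_body L [set reduct_elem I e | e in B].
Proof.
move=> sKL; rewrite !sat_imset => /forall_inP H; apply/forall_inP => e He.
exact: (red_mono sKL (H e He)).
Qed.

Lemma closed_red J (P : program n) I : closed_prog J (reduct P I) <->
  forall r, r \in P -> closed_rule J (reduct_rule I r).
Proof.
split=> H r Hr; first exact/H/imset_f.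
by case/imsetP: Hr => r' Hr' ->; apply: H.
Qed.

Lemma closed_self I r : closed_rule I (reduct_rule I r) =
  sat_body I (rbody r) ==> sat_head I (Defs.head r).
Proof. by rewrite /closed_rule /reduct_rule /= sat_red_self. Qed.

Lemma fr_head r : Defs.head (fr r) = Defs.head r.
Proof. by rewrite /fr; case: ifP. Qed.

Lemma closed_fr I r : closed_rule I (reduct_rule I (fr r)) = closed_rule I (reduct_rule I r).
Proof. by rewrite !closed_self fr_head /fr; case: ifP => // _ /=; rewrite sat_conv. Qed.

Lemma covers_conv B z : covers (conv B) z = covers B z.
Proof. rewrite /covers !in_conv /=. by case: (EVar z \in B); case: (ENot z \in B); case: (ENotNot z \in B). Qed.

Lemma covers_U1 x C z : covers (EVar x |: C) z = (z == x) || covers C z.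
Proof.
have e1 : (EVar z == EVar x :> elem n) = (z == x) by apply/eqP/eqP => [[]|->].
have e2 : (ENot z == EVar x :> elem n) = false by apply/negbTE/eqP.
have e3 : (ENotNot z == EVar x :> elem n) = false by apply/negbTE/eqP.
by rewrite /covers !in_setU1 e1 e2 e3 /= -orbA.
Qed.

Lemma covers_bwh h C1 C2 : (forall z, covers C1 z = covers C2 z) ->
  fully_covers (body_with_head (h, C1)) = fully_covers (body_with_head (h, C2)).
Proof.
move=> E; rewrite /fully_covers /body_with_head /=; case: h => [x|].
- by apply: eq_forallb => z; rewrite !covers_U1 E.
- by apply: eq_forallb => z; exact: E.
Qed.

Lemma bwh_fr r : fully_covers (body_with_head (fr r)) = fully_covers (body_with_head r).
Proof.
rewrite /fr; case: ifP => // <-; case: r => h B /=.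
apply: covers_bwh => z; exact: covers_conv.
Qed.

Lemma in_bigcup_vars C z : (z \in \bigcup_(e in C) elem_vars e) = covers C z.
Proof.
apply/bigcupP/or3P => [[e He]|].
- case: e He => [||y|y|y] He /=; rewrite ?in_set0 ?inE // => /eqP ->.
  + by constructor 1.
  + by constructor 2.
  + by constructor 3.
- by case=> Hz; [exists (EVar z) | exists (ENot z) | exists (ENotNot z)] => //=; rewrite inE.
Qed.

Lemma rule_vars_fr r : rule_vars (fr r) = rule_vars r.
Proof.
apply/setP=> z; rewrite /rule_vars fr_head !in_setU !in_bigcup_vars /fr.
by case: ifP => // _ /=; rewrite covers_conv.
Qed.

Lemma sat_U1 K e C : sat_body K (e |: C) = sat_elem K e && sat_body K C.
Proof.
apply/sat_bodyP/andP => [H|[He /sat_bodyP HC] e'].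
- split; first by apply: H; rewrite setU11.
  by apply/sat_bodyP => e' He'; apply: H; rewrite setU1r.
- by case/setU1P => [->//|]; exact: HC.
Qed.

Lemma fully_unique C I K : fully_covers C -> sat_body I C -> sat_body K C -> K = I.
Proof.
move=> /forallP Hc /sat_bodyP HI /sat_bodyP HK; apply/setP => z.
have := Hc z; rewrite /covers; case/or3P => Hz.
- by have := HK _ Hz; have := HI _ Hz; rewrite /= => -> ->.
- by have := HK _ Hz; have := HI _ Hz; rewrite /= => /negbTE -> /negbTE ->.
- by have := HK _ Hz; have := HI _ Hz; rewrite /= => -> ->.
Qed.

Lemma S_single C I : fully_covers C -> sat_body I C -> #|S C| = 1.
Proof.
move=> Hf HI; have -> : S C = [set I].
  apply/setP => K; rewrite /S !inE; apply/idP/eqP => [HK|->//].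
  exact: fully_unique HK.
by rewrite cards1.
Qed.

Lemma S_conv B : S (conv B) = S B.
Proof. by apply/setP => K; rewrite /S !inE sat_conv. Qed.

Lemma S_convU1 x B : S (EVar x |: conv B) = S (EVar x |: B).
Proof. by apply/setP => K; rewrite /S !inE !sat_U1 sat_conv. Qed.

End Aux.
Arguments fr {n}.
Arguments conv {n}.

Section Main.
Variable n : nat.
Implicit Types (I J K L : interp n) (B C : body n) (e : elem n) (r : rule n).

Lemma sat_head_I h J I : sat_head J h -> sat_head I h -> sat_head (J :&: I) h.
Proof. by case: h => //= x HJ HI; rewrite inE HJ HI. Qed.

Lemma dir1 I J r : closed_rule J (reduct_rule I (fr r)) ->
  closed_rule I (reduct_rule I r) -> closed_rule (J :&: I) (reduct_rule I r).
Proof.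
rewrite /closed_rule /reduct_rule /= fr_head => HJ HI; apply/implyP => Hb.
have HbI := red_mono_body (subsetIr J I) Hb.
have HbJ := red_mono_body (subsetIl J I) Hb.
apply: sat_head_I; last exact: (implyP HI).
apply: (implyP HJ); move: HbI; rewrite /fr; case: ifP => // _ /= HbI.
by rewrite red_conv -sat_red_self.
Qed.

Lemma dir2 I J r : closed_rule J (reduct_rule I r) ->
  closed_rule I (reduct_rule I r) ->
  (fully_covers (body_with_head r) -> sat_body I (rbody r) -> False) ->
  closed_rule (J :&: I) (reduct_rule I (fr r)).
Proof.
rewrite /closed_rule /reduct_rule /= fr_head => HJ HI Hplus; apply/implyP.
rewrite /fr; case: ifP => Hf /= Hb.
- by exfalso; apply: (Hplus Hf); rewrite -(red_conv (J :&: I)).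
- have HbI := red_mono_body (subsetIr J I) Hb.
  have HbJ := red_mono_body (subsetIl J I) Hb.
  apply: sat_head_I; [exact: (implyP HJ) | exact: (implyP HI)].
Qed.

End Main.

Theorem mainTheorem16 (n : nat) (P : program n) :
  standard P -> no_self_loop P -> bodies_consistent P ->
  exists P' : program n, almost_pure P' /\ #|P'| <= #|P|.
Proof.
move=> [[Hvars Hans] Hstd] Hnsl Hcons.
exists (fr @: P); split; last exact: leq_imset_card.
have Hpar : parity_program (fr @: P).
  split.
  - rewrite -Hvars; apply/setP => z; rewrite /prog_vars.
    apply/bigcupP/bigcupP => [[r' /imsetP [r Hr ->] Hz]|[r Hr Hz]].
    + by exists r => //; rewrite -rule_vars_fr.
    + by exists (fr r); [exact: imset_f | rewrite rule_vars_fr].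
  - move=> I; split.
    + move=> [HcI Hmin]; apply/negPn/negP => Hev.
      have HcIP : closed_prog I (reduct P I).
        apply/closed_red => r Hr; rewrite -closed_fr.
        by move/closed_red: HcI; apply; exact: imset_f.
      suff: answer_set P I by move/Hans; rewrite (negbTE Hev).
      split => // J HJ.
      apply: subset_trans (subsetIl J I); apply: Hmin.
      apply/closed_red => r' /imsetP [r Hr ->].
      apply: dir2.
      * by move/closed_red: HJ; apply.
      * by move/closed_red: HcIP; apply.
      * move=> Hf HbI.
        have := (proj1 (closed_red _ _ _) HcIP) r Hr; rewrite closed_self HbI /=.
        case: r Hr Hf HbI => [[x|] B] Hr Hf HbI //= Hx.
        pose I2 := I :\ x.
        have Hodd : odd #|I2|.
          by move: Hev; rewrite (cardsD1 x I) Hx add1n /= negbK.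
        have [HcI2 _] := (proj2 (Hans I2)) Hodd.
        have := (proj1 (closed_red _ _ _) HcI2) _ Hr; rewrite closed_self /=.
        suff -> : sat_body I2 B by rewrite /I2 setD11.
        apply/sat_bodyP => e He; move/sat_bodyP: HbI => HbI.
        have := HbI e He; case: e He => //= z He.
        -- move=> Hz; rewrite /I2 in_setD1 Hz andbT; apply/eqP => Ezx.
           by have := Hnsl x B Hr; rewrite /pos_vars inE -Ezx He.
        -- by rewrite /I2 in_setD1 negb_and => ->; rewrite orbT.
        -- move=> Hz; rewrite /I2 in_setD1 Hz andbT; apply/eqP => Ezx.
           have := Hstd x B Hr; rewrite -Ezx He => H.
           suff Hs : #|S (EVar z |: B)| = 1 by have := H Hs.
           rewrite Ezx; apply: (S_single (I := I)) => //.
           by rewrite sat_U1 /= Hx; apply/sat_bodyP.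
    + move=> Hodd; have [HcI Hmin] := (proj2 (Hans I)) Hodd.
      split.
      * apply/closed_red => r' /imsetP [r Hr ->]; rewrite closed_fr.
        by move/closed_red: HcI; apply.
      * move=> J HJ; apply: subset_trans (subsetIl J I); apply: Hmin.
        apply/closed_red => r Hr; apply: dir1.
        -- by move/closed_red: HJ; apply; exact: imset_f.
        -- by move/closed_red: HcI; apply.
split; first split => //.
- move=> x B' /imsetP [[h B] Hr]; rewrite /fr /=; case: ifP => Hf [Eh EB].
  + subst h B'; rewrite S_convU1 in_conv negb_or => /(Hstd x B Hr) ->.
    by have := Hnsl x B Hr; rewrite /pos_vars inE.
  + by subst h B'; exact: Hstd.
- move=> y B' /imsetP [[h B] Hr]; rewrite /fr /=; case: ifP => Hf [Eh EB].
  + by subst h B'; rewrite /pos_vars inE in_conv.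
  + by subst h B'; exact: Hnsl.
- move=> r' /imsetP [r Hr ->]; rewrite /fr; case: ifP => _ /=; last exact: Hcons.
  by rewrite /consistent S_conv; exact: Hcons.
- move=> r'; rewrite /Fplus /Fminus !inE => /andP [Hn Hr'].
  move: Hn; rewrite Hr' /= negbK.
  case/imsetP: Hr' => r Hr ->; rewrite bwh_fr /fr => ->.
  by apply/setP => z; rewrite /pos_vars !inE.
Qed.
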